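(* Let $(a_n)$, $(b_n)$ be positive sequences and set $p_n=a_n n^{-1}\log n$ and $q_n=b_n n^{-1}\log n$. Suppose there is a constant $C$ such that $C^{-1}\le a_n,b_n\le C$ for all but finitely many $n$. Then $P(n,p_n,q_n)=o(n^{-1})$ if and only if \[ (a_n+b_n-2\sqrt{a_nb_n}-1)\log n+\tfrac12\log\log n\to\infty . \]
   Context: For integers $m,n\ge0$ and $p,q\in[0,1]$, $P(m,n,p,q)=\Pr(Y\ge X)$ where $X\sim\mathrm{Binom}(m,\max\{p,q\})$ and $Y\sim\mathrm{Binom}(n,\min\{p,q\})$ are independent; $P(n,p,q)=P(n,n,p,q)$. *)

(* Defs.v *)
From Stdlib Require Import Reals Lra Arith.
From Coquelicot Require Import Coquelicot.
Open Scope R_scope.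

Definition binom_pmf (m i : nat) (r : R) : R :=
  Binomial.C m i * r ^ i * (1 - r) ^ (m - i).

(* Pwin m n p q = Pr(Y >= X), X ~ Bin(m, max p q), Y ~ Bin(n, min p q),
   independent:  sum over i in 0..m, j in 0..n with i <= j of the product
   of the two pmfs. *)
Definition Pwin (m n : nat) (p q : R) : R :=
  sum_f_R0 (fun i =>
    sum_f_R0 (fun j =>
      if Nat.leb i j
      then binom_pmf m i (Rmax p q) * binom_pmf n j (Rmin p q)
      else 0) n) m.

Definition Pdiag (n : nat) (p q : R) : R := Pwin n n p q.

(* Main.v *)
Require Import Defs.
From Stdlib Require Import Reals Lra Lia Arith.
From Coquelicot Require Import Coquelicot.
Open Scope R_scope.

Definition tt (w : R) (k : nat) : R := w ^ k / INR (Factorial.fact k).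

Lemma fact_pos (k : nat) : 0 < INR (Factorial.fact k).
Proof. apply lt_0_INR, Factorial.lt_O_fact. Qed.

Lemma tt_S w k : tt w (S k) = tt w k * w / INR (S k).
Proof.
  unfold tt. rewrite fact_simpl, mult_INR. simpl pow.
  pose proof (fact_pos k). assert (0 < INR (S k)) by (apply lt_0_INR; lia).
  field. lra.
Qed.

Lemma tt_nonneg w k : 0 <= w -> 0 <= tt w k.
Proof. intros. unfold tt. apply Rdiv_le_0_compat. apply pow_le; auto. apply fact_pos. Qed.

Lemma exp_pow_n (x : R) (n : nat) : exp x ^ n = exp (INR n * x).
Proof.
  induction n. simpl. rewrite Rmult_0_l, exp_0. auto.
  rewrite S_INR. simpl pow. rewrite IHn, <- exp_plus. f_equal. ring.
Qed.

Lemma tt_mode w m : 0 <= w -> INR m <= w < INR m + 1 -> forall j, tt w j <= tt w m.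
Proof.
  intros hw [h1 h2] j.
  destruct (le_lt_dec j m) as [hj|hj].
  - assert (forall d, (d <= m)%nat -> tt w (m - d) <= tt w m).
    { induction d; intros hd. rewrite Nat.sub_0_r; lra.
      assert (e: (m - d = S (m - S d))%nat) by lia.
      assert (tt w (m - S d) <= tt w (m - d)).
      { rewrite e, tt_S. pose proof (tt_nonneg w (m - S d) hw).
        assert (INR (S (m - S d)) <= w).
        { rewrite <- e. apply Rle_trans with (INR m); auto. apply le_INR; lia. }
        assert (0 < INR (S (m - S d))) by (apply lt_0_INR; lia).
        apply Rmult_le_reg_r with (INR (S (m - S d))); auto.
        field_simplify; try lra. nra. }
      specialize (IHd ltac:(lia)). lra. }
    replace j with (m - (m - j))%nat by lia. apply H. lia.
  - assert (forall d, tt w (m + d) <= tt w m).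
    { induction d. rewrite Nat.add_0_r; lra.
      replace (m + S d)%nat with (S (m + d)) by lia. rewrite tt_S.
      pose proof (tt_nonneg w (m + d) hw).
      assert (w <= INR (S (m + d))).
      { rewrite S_INR, plus_INR. pose proof (pos_INR d). lra. }
      assert (0 < INR (S (m + d))) by (apply lt_0_INR; lia).
      apply Rle_trans with (tt w (m + d)); auto.
      apply Rmult_le_reg_r with (INR (S (m + d))); auto.
      field_simplify; try lra. nra. }
    replace j with (m + (j - m))%nat by lia. apply H.
Qed.

Lemma tt_window_ratio w m : 0 < w -> INR m <= w ->
  forall t, tt w m * (w / (w + INR t)) ^ t <= tt w (m + t).
Proof.
  intros hw hm. induction t.
  - rewrite Nat.add_0_r. simpl. lra.
  - replace (m + S t)%nat with (S (m + t)) by lia. rewrite tt_S.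
    pose proof (pos_INR t).
    assert (h1: (w / (w + INR (S t))) ^ t <= (w / (w + INR t)) ^ t).
    { apply pow_incr. rewrite S_INR. split.
      apply Rdiv_le_0_compat; lra.
      apply Rmult_le_compat_l; try lra. apply Rinv_le_contravar; lra. }
    assert (h2: w / (w + INR (S t)) <= w / INR (S (m + t))).
    { apply Rmult_le_compat_l; try lra. apply Rinv_le_contravar.
      apply lt_0_INR; lia. rewrite !S_INR, plus_INR. lra. }
    assert (0 <= tt w m) by (apply tt_nonneg; lra).
    assert (0 <= w / (w + INR (S t))) by (apply Rdiv_le_0_compat; rewrite ?S_INR; lra).
    rewrite <- tech_pow_Rmult.
    set (X := tt w m) in *. set (a := (w / (w + INR t)) ^ t) in *.
    set (b := (w / (w + INR (S t))) ^ t) in *. set (c := w / (w + INR (S t))) in *.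
    set (d := w / INR (S (m + t))) in *. set (Y := tt w (m + t)) in *.
    assert (0 <= b) by (apply pow_le; auto).
    assert (0 <= a) by (apply pow_le; apply Rdiv_le_0_compat; lra).
    replace (Y * w / INR (S (m + t))) with (Y * d) by (unfold d, Rdiv; ring).
    assert (X * (c * b) <= X * a * d).
    { rewrite (Rmult_comm c b), <- Rmult_assoc. apply Rmult_le_compat; auto.
      apply Rmult_le_pos; auto. apply Rmult_le_compat_l; auto. }
    assert (X * a * d <= Y * d).
    { apply Rmult_le_compat_r; auto. apply Rle_trans with c; auto. }
    lra.
Qed.

Lemma pow_ratio_lower w t : 0 < w -> INR t * INR t <= w -> exp (-1) <= (w / (w + INR t)) ^ t.
Proof.
  intros hw ht. pose proof (pos_INR t).
  assert (e: w / (w + INR t) = / (1 + INR t / w)) by (field; lra).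
  rewrite e, pow_inv.
  assert (h: (1 + INR t / w) ^ t <= exp (INR t / w) ^ t).
  { apply pow_incr. split. assert (0 <= INR t / w) by (apply Rdiv_le_0_compat; lra). lra.
    apply exp_ineq1_le. }
  rewrite exp_pow_n in h.
  assert (INR t * (INR t / w) <= 1).
  { unfold Rdiv. rewrite <- Rmult_assoc. apply Rmult_le_reg_r with w; auto.
    rewrite Rmult_assoc, Rinv_l; lra. }
  assert (exp (INR t * (INR t / w)) <= exp 1).
  { destruct (Req_dec (INR t * (INR t / w)) 1) as [E|E]. rewrite E; lra.
    left; apply exp_increasing; lra. }
  assert (0 < (1 + INR t / w) ^ t).
  { apply pow_lt. assert (0 <= INR t / w) by (apply Rdiv_le_0_compat; lra). lra. }
  assert (em: exp (-1) = / exp 1).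
  { assert (hh: exp (-1) * exp 1 = 1) by (rewrite <- exp_plus; replace (-1 + 1) with 0 by ring; apply exp_0).
    pose proof (exp_pos 1). apply Rmult_eq_reg_r with (exp 1); [|lra].
    rewrite hh, Rinv_l; lra. }
  rewrite em. apply Rinv_le_contravar; auto. lra.
Qed.

Lemma sum_term_le (f : nat -> R) (n k : nat) : (forall i, 0 <= f i) -> (k <= n)%nat ->
  f k <= sum_f_R0 f n.
Proof.
  intros hf. induction n; intros hk.
  - replace k with 0%nat by lia. simpl; lra.
  - rewrite tech5. destruct (Nat.eq_dec k (S n)). subst.
    pose proof (cond_pos_sum f n hf). lra.
    specialize (IHn ltac:(lia)). specialize (hf (S n)). lra.
Qed.

Lemma sum_mono_N (f : nat -> R) (n m : nat) : (forall i, 0 <= f i) -> (n <= m)%nat ->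
  sum_f_R0 f n <= sum_f_R0 f m.
Proof.
  intros hf hnm. induction hnm. lra. rewrite tech5. specialize (hf (S m)). lra.
Qed.

Lemma sum_shift_le (f : nat -> R) (m r : nat) : (forall i, 0 <= f i) ->
  sum_f_R0 (fun t => f (m + t)%nat) r <= sum_f_R0 f (m + r).
Proof.
  intros hf. induction r.
  - simpl. rewrite Nat.add_0_r. apply sum_term_le; auto.
  - rewrite tech5. replace (m + S r)%nat with (S (m + r)) by lia. rewrite tech5. lra.
Qed.

Lemma sum_const_le (f : nat -> R) (c : R) (r : nat) : (forall t, (t <= r)%nat -> c <= f t) ->
  INR (S r) * c <= sum_f_R0 f r.
Proof.
  induction r; intros h. simpl. specialize (h 0%nat (le_n _)). lra.
  rewrite tech5, S_INR. specialize (IHr (fun t ht => h t ltac:(lia))).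
  specialize (h (S r) (le_n _)). lra.
Qed.

Lemma exp_m1_ge : / 3 <= exp (-1).
Proof.
  assert (hh: exp (-1) * exp 1 = 1) by (rewrite <- exp_plus; replace (-1 + 1) with 0 by ring; apply exp_0).
  pose proof exp_le_3. pose proof (exp_pos 1). pose proof (exp_pos (-1)). nra.
Qed.

Lemma sum_tt_le_exp w N : 0 <= w -> sum_f_R0 (tt w) N <= exp w.
Proof. intros. apply exp_ge_taylor; auto. Qed.

Lemma poisson_max w : 1 <= w -> forall j, tt w j <= 3 * exp w / sqrt w.
Proof.
  intros hw j.
  destruct (nfloor_ex w ltac:(lra)) as [m hm].
  assert (hs: 1 <= sqrt w) by (rewrite <- sqrt_1; apply sqrt_le_1_alt; lra).
  destruct (nfloor_ex (sqrt w) ltac:(lra)) as [r hr].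
  pose proof (tt_mode w m ltac:(lra) hm j).
  assert (hwin: forall t, (t <= r)%nat -> tt w m * exp (-1) <= tt w (m + t)).
  { intros t ht. apply Rle_trans with (tt w m * (w / (w + INR t)) ^ t).
    - apply Rmult_le_compat_l. apply tt_nonneg; lra.
      apply pow_ratio_lower. lra.
      assert (INR t <= sqrt w). { apply Rle_trans with (INR r). apply le_INR; auto. lra. }
      pose proof (pos_INR t). rewrite <- (sqrt_sqrt w) by lra. nra.
    - apply tt_window_ratio; lra. }
  pose proof (sum_const_le (fun t => tt w (m + t)) _ r hwin).
  pose proof (sum_shift_le (tt w) m r (fun i => tt_nonneg w i ltac:(lra))).
  pose proof (sum_tt_le_exp w (m + r) ltac:(lra)).
  rewrite S_INR in H0.
  pose proof exp_m1_ge. pose proof (tt_nonneg w m ltac:(lra)).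
  assert (sqrt w * (tt w m * exp (-1)) <= exp w).
  { apply Rle_trans with ((INR r + 1) * (tt w m * exp (-1))); [|lra].
    apply Rmult_le_compat_r. apply Rmult_le_pos; auto; left; apply exp_pos. lra. }
  apply Rle_trans with (tt w m); auto.
  apply Rmult_le_reg_r with (sqrt w). lra.
  unfold Rdiv. rewrite Rmult_assoc, Rinv_l by lra.
  assert (0 <= sqrt w * tt w m) by (apply Rmult_le_pos; lra).
  assert (0 <= (sqrt w * tt w m) * (exp (-1) - /3)) by (apply Rmult_le_pos; lra).
  nra.
Qed.

Lemma cheb_identity z N :
  sum_f_R0 (fun k => (INR k - z) ^ 2 * tt z k) N =
  z * sum_f_R0 (tt z) N + z * tt z N * (z - INR N - 1).
Proof.
  induction N.
  - simpl. unfold tt. simpl. field.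
  - rewrite !tech5, IHN, tt_S. rewrite S_INR.
    assert (0 < INR (S N)) by (apply lt_0_INR; lia). rewrite S_INR in H.
    field. lra.
Qed.

Lemma Rabs_le_inv' x c : Rabs x <= c -> - c <= x <= c.
Proof. unfold Rabs. destruct Rcase_abs; intros; lra. Qed.

Definition ind (z c : R) (k : nat) : R := if Rle_dec (Rabs (INR k - z)) c then 1 else 0.

Lemma count_ind z c N : 0 <= c ->
  sum_f_R0 (ind z c) N <= Rmax 0 (Rmin (INR N) (z + c) - (z - c) + 1).
Proof.
  intros hc. induction N.
  - simpl. unfold ind. change (INR 0) with 0 in *. destruct Rle_dec as [h|h].
    + apply Rabs_le_inv' in h. unfold Rmin, Rmax. repeat destruct Rle_dec; lra.
    + unfold Rmax. destruct Rle_dec; lra.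
  - rewrite tech5. unfold ind at 2. rewrite S_INR. destruct Rle_dec as [h|h].
    + apply Rabs_le_inv' in h.
      revert IHN. unfold Rmin, Rmax. repeat destruct Rle_dec; lra.
    + revert IHN. unfold Rmin, Rmax. repeat destruct Rle_dec; lra.
Qed.

Lemma count_ind' z c N : 0 <= c -> sum_f_R0 (ind z c) N <= 2 * c + 1.
Proof.
  intros hc. pose proof (count_ind z c N hc). revert H. unfold Rmin, Rmax.
  repeat destruct Rle_dec; lra.
Qed.

Lemma poisson_mode_lower z m : 1 <= z -> INR m <= z < INR m + 1 ->
  exp z <= 7 * sqrt z * tt z m.
Proof.
  intros hz hm.
  assert (hs: 1 <= sqrt z) by (rewrite <- sqrt_1; apply sqrt_le_1_alt; lra).
  assert (hsq: sqrt z * sqrt z = z) by (apply sqrt_sqrt; lra).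
  pose proof (tt_nonneg z m ltac:(lra)) as htm.
  assert (key: forall N, z <= INR N -> sum_f_R0 (tt z) N <= 7 * sqrt z * tt z m).
  { intros N hN.
    assert (h1: sum_f_R0 (tt z) N <=
      sum_f_R0 (fun k => tt z m * ind z (2 * sqrt z) k + (INR k - z) ^ 2 * tt z k / (4 * z)) N).
    { apply sum_Rle. intros k _. unfold ind. pose proof (tt_nonneg z k ltac:(lra)).
      pose proof (tt_mode z m ltac:(lra) hm k).
      destruct Rle_dec as [h|h].
      - assert (0 <= (INR k - z) ^ 2 * tt z k / (4 * z)).
        { apply Rdiv_le_0_compat. apply Rmult_le_pos; auto. apply pow2_ge_0. lra. }
        lra.
      - apply Rnot_le_lt in h.
        assert (4 * z < (INR k - z) ^ 2).
        { replace (4 * z) with ((2 * sqrt z) ^ 2) by (simpl; nra).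
          rewrite <- (pow2_abs (INR k - z)). simpl. nra. }
        rewrite Rmult_0_r, Rplus_0_l.
        apply Rmult_le_reg_r with (4 * z). lra.
        unfold Rdiv. rewrite Rmult_assoc, Rinv_l by lra. nra. }
    rewrite sum_plus in h1.
    assert (e1: sum_f_R0 (fun k => tt z m * ind z (2 * sqrt z) k) N =
                tt z m * sum_f_R0 (ind z (2 * sqrt z)) N).
    { rewrite scal_sum. apply sum_eq. intros; ring. }
    rewrite e1 in h1.
    assert (e2: sum_f_R0 (fun k => (INR k - z) ^ 2 * tt z k / (4 * z)) N =
                sum_f_R0 (fun k => (INR k - z) ^ 2 * tt z k) N * / (4 * z)).
    { rewrite (Rmult_comm (sum_f_R0 _ N)), scal_sum. apply sum_eq. intros; unfold Rdiv; ring. }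
    rewrite e2, cheb_identity in h1.
    pose proof (count_ind' z (2 * sqrt z) N ltac:(lra)).
    pose proof (tt_nonneg z N ltac:(lra)).
    assert (z * tt z N * (z - INR N - 1) <= 0).
    { assert (0 <= z * tt z N) by (apply Rmult_le_pos; lra). nra. }
    set (E := sum_f_R0 (tt z) N) in *.
    assert ((z * E + z * tt z N * (z - INR N - 1)) * / (4 * z) <= E / 4).
    { apply Rmult_le_reg_r with (4 * z). lra.
      rewrite Rmult_assoc, Rinv_l by lra. field_simplify; lra. }
    assert (tt z m * sum_f_R0 (ind z (2 * sqrt z)) N <= tt z m * (2 * (2 * sqrt z) + 1)).
    { apply Rmult_le_compat_l; auto. }
    nra. }
  unfold exp. destruct (exist_exp z) as [l hl]. simpl.
  apply Rnot_lt_le. intros hlt.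
  set (eps := l - 7 * sqrt z * tt z m).
  destruct (hl eps ltac:(unfold eps; lra)) as [N0 hN0].
  destruct (nfloor_ex z ltac:(lra)) as [N1 hN1].
  specialize (hN0 (max N0 (S N1)) ltac:(lia)).
  assert (hz': z <= INR (max N0 (S N1))).
  { apply Rle_trans with (INR (S N1)). rewrite S_INR; lra. apply le_INR; lia. }
  specialize (key _ hz').
  assert (e: sum_f_R0 (fun i => / INR (Factorial.fact i) * z ^ i) (max N0 (S N1)) =
             sum_f_R0 (tt z) (max N0 (S N1))).
  { apply sum_eq. intros; unfold tt, Rdiv; ring. }
  rewrite e in hN0. unfold Rdist in hN0. apply Rabs_def2 in hN0. unfold eps in hN0. lra.
Qed.

Lemma poisson_window z m r : 1 <= z -> INR m <= z < INR m + 1 ->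
  INR r <= sqrt z < INR r + 1 ->
  exp z * exp z / (441 * sqrt z) <= sum_f_R0 (fun t => tt z (m + t) ^ 2) r.
Proof.
  intros hz hm hr.
  assert (hs: 1 <= sqrt z) by (rewrite <- sqrt_1; apply sqrt_le_1_alt; lra).
  assert (hsq: sqrt z * sqrt z = z) by (apply sqrt_sqrt; lra).
  pose proof (poisson_mode_lower z m hz hm).
  pose proof exp_m1_ge. pose proof (tt_nonneg z m ltac:(lra)).
  assert (hlow: exp z / (21 * sqrt z) <= tt z m * exp (-1)).
  { apply Rmult_le_reg_r with (21 * sqrt z). lra.
    unfold Rdiv. rewrite Rmult_assoc, Rinv_l by lra.
    assert (0 <= sqrt z * tt z m) by (apply Rmult_le_pos; lra).
    assert (0 <= (sqrt z * tt z m) * (exp (-1) - /3)) by (apply Rmult_le_pos; lra).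
    nra. }
  assert (hwin: forall t, (t <= r)%nat -> (exp z / (21 * sqrt z)) ^ 2 <= tt z (m + t) ^ 2).
  { intros t ht. apply pow_incr. split.
    apply Rdiv_le_0_compat. pose proof (exp_pos z); lra. lra.
    apply Rle_trans with (tt z m * exp (-1)); auto.
    apply Rle_trans with (tt z m * (z / (z + INR t)) ^ t).
    - apply Rmult_le_compat_l; auto.
      apply pow_ratio_lower. lra.
      assert (INR t <= sqrt z). { apply Rle_trans with (INR r). apply le_INR; auto. lra. }
      pose proof (pos_INR t). rewrite <- hsq. nra.
    - apply tt_window_ratio; lra. }
  pose proof (sum_const_le _ _ r hwin) as H3. rewrite S_INR in H3.
  assert (e: (exp z / (21 * sqrt z)) ^ 2 = exp z * exp z / (441 * sqrt z) / sqrt z).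
  { field. lra. }
  rewrite e in H3.
  assert (0 <= exp z * exp z / (441 * sqrt z) / sqrt z).
  { pose proof (exp_pos z). apply Rdiv_le_0_compat; [|lra]. apply Rdiv_le_0_compat; [nra|lra]. }
  assert (H5: sqrt z * (exp z * exp z / (441 * sqrt z) / sqrt z) <= (INR r + 1) * (exp z * exp z / (441 * sqrt z) / sqrt z)).
  { apply Rmult_le_compat_r; auto; lra. }
  replace (sqrt z * (exp z * exp z / (441 * sqrt z) / sqrt z)) with (exp z * exp z / (441 * sqrt z)) in H5 by (field; lra).
  lra.
Qed.

Lemma C_0 n : Binomial.C n 0 = 1.
Proof.
  unfold Binomial.C. rewrite Nat.sub_0_r. simpl (Factorial.fact 0). pose proof (fact_pos n).
  simpl INR. field. lra.
Qed.

Lemma C_step n i : (i < n)%nat -> Binomial.C n (S i) = Binomial.C n i * (INR n - INR i) / INR (S i).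
Proof.
  intros h. unfold Binomial.C.
  assert (e: (n - i = S (n - S i))%nat) by lia. rewrite e.
  rewrite !fact_simpl, !mult_INR.
  rewrite <- e. rewrite minus_INR by lia.
  pose proof (fact_pos i). pose proof (fact_pos (n - S i)). pose proof (fact_pos n).
  assert (0 < INR (S i)) by (apply lt_0_INR; lia).
  assert (0 < INR n - INR i) by (rewrite <- minus_INR by lia; apply lt_0_INR; lia).
  field. lra.
Qed.

Lemma C_upper n i : (i <= n)%nat -> Binomial.C n i <= tt (INR n) i.
Proof.
  induction i; intros h.
  - rewrite C_0. unfold tt. simpl. lra.
  - rewrite C_step by lia. rewrite tt_S.
    assert (0 < INR (S i)) by (apply lt_0_INR; lia).
    assert (INR i < INR n) by (apply lt_INR; lia). pose proof (pos_INR i).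
    unfold Rdiv. apply Rmult_le_compat_r. left; apply Rinv_0_lt_compat; auto.
    apply Rmult_le_compat; try lra.
    unfold Binomial.C. apply Rdiv_le_0_compat. left; apply fact_pos.
    apply Rmult_lt_0_compat; apply fact_pos.
    apply IHi; lia.
Qed.

Lemma C_lower n i : (i <= n)%nat -> tt (INR n - INR i) i <= Binomial.C n i.
Proof.
  induction i; intros h.
  - rewrite C_0. unfold tt. simpl. lra.
  - rewrite C_step by lia. rewrite tt_S.
    assert (0 < INR (S i)) by (apply lt_0_INR; lia).
    assert (INR (S i) <= INR n) by (apply le_INR; lia). rewrite S_INR in *.
    pose proof (pos_INR i).
    unfold Rdiv. apply Rmult_le_compat_r. left; apply Rinv_0_lt_compat; auto.
    apply Rmult_le_compat; try lra.
    apply tt_nonneg; lra.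
    apply Rle_trans with (tt (INR n - INR i) i).
    + unfold tt. unfold Rdiv. apply Rmult_le_compat_r. left; apply Rinv_0_lt_compat, fact_pos.
      apply pow_incr. lra.
    + apply IHi; lia.
Qed.

Lemma bernoulli x k : 0 <= x <= 1 -> 1 - INR k * x <= (1 - x) ^ k.
Proof.
  intros hx. induction k.
  - simpl; lra.
  - rewrite S_INR. simpl pow. pose proof (pos_INR k).
    assert (0 <= (1 - x) ^ k) by (apply pow_le; lra).
    assert (0 <= INR k * x * x) by (apply Rmult_le_pos; [apply Rmult_le_pos|]; lra).
    nra.
Qed.

Lemma pmf_upper n i r : (i <= n)%nat -> 0 <= r <= 1 ->
  binom_pmf n i r <= exp (- (INR n * r)) * tt (INR n * r * exp r) i.
Proof.
  intros hi hr. unfold binom_pmf.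
  assert (h1: (1 - r) ^ (n - i) <= exp (- r) ^ (n - i)).
  { apply pow_incr. split. lra. pose proof (exp_ineq1_le (- r)). lra. }
  rewrite exp_pow_n in h1. rewrite minus_INR in h1 by lia.
  pose proof (C_upper n i hi).
  assert (0 <= Binomial.C n i).
  { unfold Binomial.C. apply Rdiv_le_0_compat. left; apply fact_pos.
    apply Rmult_lt_0_compat; apply fact_pos. }
  assert (0 <= r ^ i) by (apply pow_le; lra).
  assert (0 <= (1 - r) ^ (n - i)) by (apply pow_le; lra).
  apply Rle_trans with (tt (INR n) i * r ^ i * exp ((INR n - INR i) * - r)).
  { apply Rmult_le_compat; auto. apply Rmult_le_pos; auto. apply Rmult_le_compat_r; auto. }
  apply Req_le. unfold tt. rewrite !Rpow_mult_distr, exp_pow_n.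
  replace ((INR n - INR i) * - r) with (- (INR n * r) + INR i * r) by ring.
  rewrite exp_plus. pose proof (fact_pos i). field. lra.
Qed.

Lemma pmf_lower n i r : (i <= n)%nat -> 0 <= r <= 1 -> (0 < n)%nat ->
  INR i * INR i <= INR n / 4 -> INR n * r ^ 2 <= / 4 ->
  exp (- (INR n * r)) * tt (INR n * r) i / 2 <= binom_pmf n i r.
Proof.
  intros hi hr hn hii hnr. unfold binom_pmf.
  assert (hN: 0 < INR n) by (apply lt_0_INR; lia).
  pose proof (pos_INR i).
  assert (hC: tt (INR n) i * (1 - INR i * INR i / INR n) <= Binomial.C n i).
  { apply Rle_trans with (tt (INR n - INR i) i); [|apply C_lower; auto].
    unfold tt. replace (INR n - INR i) with (INR n * (1 - INR i / INR n)) by (field; lra).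
    rewrite Rpow_mult_distr.
    pose proof (bernoulli (INR i / INR n) i).
    assert (INR i <= INR n) by (apply le_INR; auto).
    assert (0 <= INR i / INR n <= 1).
    { split. apply Rdiv_le_0_compat; lra. apply Rmult_le_reg_r with (INR n); auto.
      unfold Rdiv; rewrite Rmult_assoc, Rinv_l; lra. }
    specialize (H0 H2).
    pose proof (fact_pos i). assert (0 <= INR n ^ i) by (apply pow_le; lra).
    set (F := INR (Factorial.fact i)) in *. set (Nn := INR n ^ i) in *.
    set (B := (1 - INR i / INR n) ^ i) in *.
    replace (1 - INR i * INR i / INR n) with (1 - INR i * (INR i / INR n)) by (unfold Rdiv; ring).
    assert (0 <= Nn / F) by (apply Rdiv_le_0_compat; lra).
    replace (Nn * B / F) with (Nn / F * B) by (unfold Rdiv; ring).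
    apply Rmult_le_compat_l; auto. }
  assert (h1: (1 - r) ^ n <= (1 - r) ^ (n - i)).
  { replace n with ((n - i) + i)%nat at 1 by lia. rewrite pow_add.
    assert ((1 - r) ^ i <= 1) by (pose proof (pow_incr (1 - r) 1 i ltac:(lra)) as hp; rewrite pow1 in hp; exact hp).
    assert (0 <= (1 - r) ^ (n - i)) by (apply pow_le; lra). nra. }
  assert (h2: exp (- (INR n * r)) * (1 - INR n * r ^ 2) <= (1 - r) ^ n).
  { assert (hb: 1 - INR n * r ^ 2 <= ((1 - r) * exp r) ^ n).
    { apply Rle_trans with ((1 - r ^ 2) ^ n).
      - apply bernoulli. split. apply pow2_ge_0. simpl. nra.
      - apply pow_incr. split. simpl; nra. pose proof (exp_ineq1_le r). simpl. nra. }
    rewrite Rpow_mult_distr, exp_pow_n in hb.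
    pose proof (exp_pos (INR n * r)).
    apply Rmult_le_reg_r with (exp (INR n * r)); auto.
    rewrite Rmult_assoc, (Rmult_comm (1 - _)), <- Rmult_assoc, <- exp_plus.
    replace (- (INR n * r) + INR n * r) with 0 by ring. rewrite exp_0. lra. }
  assert (0 <= tt (INR n) i) by (apply tt_nonneg; lra).
  assert (0 <= r ^ i) by (apply pow_le; lra).
  assert (hx: 3/4 <= 1 - INR i * INR i / INR n).
  { assert (INR i * INR i / INR n <= /4).
    { apply Rmult_le_reg_r with (INR n); auto. unfold Rdiv; rewrite Rmult_assoc, Rinv_l; lra. }
    lra. }
  assert (hy: 3/4 <= 1 - INR n * r ^ 2) by lra.
  pose proof (exp_pos (- (INR n * r))).
  assert (e: exp (- (INR n * r)) * tt (INR n * r) i = tt (INR n) i * r ^ i * exp (- (INR n * r))).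
  { unfold tt. rewrite Rpow_mult_distr. field. apply Rgt_not_eq, fact_pos. }
  rewrite e.
  set (T := tt (INR n) i) in *. set (E := exp (- (INR n * r))) in *.
  set (X := 1 - INR i * INR i / INR n) in *. set (Y := 1 - INR n * r ^ 2) in *.
  assert (T * r ^ i * E / 2 <= (T * X) * r ^ i * (E * Y)).
  { assert (0 <= T * r ^ i * E) by (apply Rmult_le_pos; [apply Rmult_le_pos|]; lra).
    replace ((T * X) * r ^ i * (E * Y)) with ((T * r ^ i * E) * (X * Y)) by ring.
    assert (1/2 <= X * Y) by nra. nra. }
  assert ((T * X) * r ^ i * (E * Y) <= Binomial.C n i * r ^ i * (1 - r) ^ (n - i)).
  { apply Rmult_le_compat; try lra.
    apply Rmult_le_pos; [|lra]. apply Rmult_le_pos; lra.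
    apply Rmult_le_pos; lra.
    apply Rmult_le_compat_r; lra. }
  lra.
Qed.

Lemma geom_if r i n : r <> 1 ->
  sum_f_R0 (fun j => if Nat.leb i j then r ^ (j - i) else 0) n = (1 - r ^ (S n - i)) / (1 - r).
Proof.
  intros hr. assert (1 - r <> 0) by lra. induction n.
  - simpl. destruct i; simpl. field; auto. field; auto.
  - rewrite tech5, IHn. destruct (Nat.leb i (S n)) eqn:E.
    + apply Nat.leb_le in E. replace (S (S n) - i)%nat with (S (S n - i)) by lia.
      replace (S n - i)%nat with (S n - i)%nat by lia. simpl pow. field; auto.
    + apply Nat.leb_gt in E. replace (S (S n) - i)%nat with 0%nat by lia.
      replace (S n - i)%nat with 0%nat by lia. simpl. field; auto.
Qed.

Lemma tt_prod_tilt w s i j : 0 < s -> (i <= j)%nat ->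
  tt (w * s) i * tt (w / s) j = tt w i * tt w j * (/ s) ^ (j - i).
Proof.
  intros hs hij. unfold tt.
  destruct (Nat.le_exists_sub i j hij) as [d [-> _]].
  replace (d + i - i)%nat with d by lia. rewrite (Nat.add_comm d i).
  unfold Rdiv. rewrite !Rpow_mult_distr, !pow_add, !pow_inv.
  pose proof (fact_pos i). pose proof (fact_pos (i + d)).
  assert (0 < s ^ i) by (apply pow_lt; auto). assert (0 < s ^ d) by (apply pow_lt; auto).
  field. repeat split; lra.
Qed.

Lemma sum_scal_l (f : nat -> R) c N : sum_f_R0 (fun i => c * f i) N = c * sum_f_R0 f N.
Proof. rewrite scal_sum. apply sum_eq. intros; ring. Qed.

Lemma dsum_upper (f g : nat -> R) n al be w s :
  1 <= w -> 1 < s -> 0 <= al -> 0 <= be ->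
  (forall i, (i <= n)%nat -> 0 <= f i <= al * tt (w * s) i) ->
  (forall j, (j <= n)%nat -> 0 <= g j <= be * tt (w / s) j) ->
  sum_f_R0 (fun i => sum_f_R0 (fun j => if Nat.leb i j then f i * g j else 0) n) n
  <= al * be * (exp w * (3 * exp w / sqrt w) * (s / (s - 1))).
Proof.
  intros hw hs hal hbe hf hg.
  set (T := 3 * exp w / sqrt w).
  assert (hT: forall j, tt w j <= T) by (intros; apply poisson_max; auto).
  assert (hG: forall i, sum_f_R0 (fun j => if Nat.leb i j then (/ s) ^ (j - i) else 0) n <= s / (s - 1)).
  { intros i. rewrite geom_if.
    2: { assert (/ s < 1). { apply Rmult_lt_reg_r with s. lra. rewrite Rinv_l; lra. } lra. }
    assert (0 < / s) by (apply Rinv_0_lt_compat; lra).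
    assert (/ s < 1). { apply Rmult_lt_reg_r with s. lra. rewrite Rinv_l; lra. }
    assert (0 <= (/ s) ^ (S n - i)) by (apply pow_le; lra).
    replace (s / (s - 1)) with (1 / (1 - / s)) by (field; lra).
    unfold Rdiv. apply Rmult_le_compat_r. left; apply Rinv_0_lt_compat; lra. lra. }
  apply Rle_trans with (sum_f_R0 (fun i => al * be * T * (s / (s - 1)) * tt w i) n).
  - apply sum_Rle. intros i hi.
    apply Rle_trans with (sum_f_R0 (fun j => al * be * T * tt w i *
        (if Nat.leb i j then (/ s) ^ (j - i) else 0)) n).
    + apply sum_Rle. intros j hj. destruct (Nat.leb i j) eqn:E.
      * apply Nat.leb_le in E.
        destruct (hf i hi) as [f0 f1]. destruct (hg j hj) as [g0 g1].
        apply Rle_trans with ((al * tt (w * s) i) * (be * tt (w / s) j)).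
        { apply Rmult_le_compat; lra. }
        replace ((al * tt (w * s) i) * (be * tt (w / s) j)) with
          (al * be * (tt (w * s) i * tt (w / s) j)) by ring.
        rewrite tt_prod_tilt by (auto; lra).
        assert (0 <= tt w i) by (apply tt_nonneg; lra).
        assert (0 <= (/ s) ^ (j - i)) by (apply pow_le; left; apply Rinv_0_lt_compat; lra).
        assert (0 <= al * be) by (apply Rmult_le_pos; auto).
        specialize (hT j).
        replace (al * be * (tt w i * tt w j * (/ s) ^ (j - i))) with
          ((al * be * tt w i * (/ s) ^ (j - i)) * tt w j) by ring.
        replace (al * be * T * tt w i * (/ s) ^ (j - i)) with
          ((al * be * tt w i * (/ s) ^ (j - i)) * T) by ring.
        apply Rmult_le_compat_l; auto.
        apply Rmult_le_pos; auto. apply Rmult_le_pos; auto.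
      * rewrite Rmult_0_r. lra.
    + rewrite sum_scal_l.
      assert (0 <= tt w i) by (apply tt_nonneg; lra).
      assert (0 <= T).
      { unfold T. apply Rdiv_le_0_compat. pose proof (exp_pos w); lra.
        apply sqrt_lt_R0; lra. }
      assert (0 <= al * be * T * tt w i)
        by (apply Rmult_le_pos; auto; apply Rmult_le_pos; auto; apply Rmult_le_pos; auto).
      specialize (hG i).
      replace (al * be * T * (s / (s - 1)) * tt w i) with (al * be * T * tt w i * (s / (s - 1))) by ring.
      apply Rmult_le_compat_l; auto.
  - rewrite sum_scal_l.
    pose proof (sum_tt_le_exp w n ltac:(lra)).
    assert (0 <= T).
    { unfold T. apply Rdiv_le_0_compat. pose proof (exp_pos w); lra.
      apply sqrt_lt_R0; lra. }
    assert (0 <= s / (s - 1)) by (apply Rdiv_le_0_compat; lra).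
    assert (0 <= al * be * T * (s / (s - 1)))
      by (apply Rmult_le_pos; auto; apply Rmult_le_pos; auto; apply Rmult_le_pos; auto).
    fold T.
    replace (al * be * (exp w * T * (s / (s - 1)))) with (al * be * T * (s / (s - 1)) * exp w) by ring.
    apply Rmult_le_compat_l; auto.
Qed.

Lemma dsum_lower (f g : nat -> R) n m r :
  (forall i, 0 <= f i) -> (forall j, 0 <= g j) -> (m + r <= n)%nat ->
  sum_f_R0 (fun t => f (m + t)%nat * g (m + t)%nat) r <=
  sum_f_R0 (fun i => sum_f_R0 (fun j => if Nat.leb i j then f i * g j else 0) n) n.
Proof.
  intros hf hg hmr.
  assert (hfg: forall i, 0 <= f i * g i) by (intros; apply Rmult_le_pos; auto).
  apply Rle_trans with (sum_f_R0 (fun i => f i * g i) (m + r)).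
  { apply (sum_shift_le (fun i => f i * g i)); auto. }
  apply Rle_trans with (sum_f_R0 (fun i => f i * g i) n).
  { apply sum_mono_N; auto. }
  apply sum_Rle. intros i hi.
  apply Rle_trans with ((fun j => if Nat.leb i j then f i * g j else 0) i).
  { simpl. rewrite Nat.leb_refl. lra. }
  apply (sum_term_le (fun j => if Nat.leb i j then f i * g j else 0)); auto.
  intros j. destruct (Nat.leb i j). apply Rmult_le_pos; auto. lra.
Qed.

Lemma exp_le_lin t : 0 <= t <= 1/2 -> exp t <= 1 + 2 * t.
Proof.
  intros ht. pose proof (exp_ineq1_le (- t)).
  assert (hh: exp t * exp (- t) = 1) by (rewrite <- exp_plus; replace (t + - t) with 0 by ring; apply exp_0).
  pose proof (exp_pos t). nra.
Qed.

Lemma pmf_nonneg n i r : 0 <= r <= 1 -> 0 <= binom_pmf n i r.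
Proof.
  intros hr. unfold binom_pmf. apply Rmult_le_pos; [apply Rmult_le_pos|].
  unfold Binomial.C. apply Rdiv_le_0_compat. left; apply fact_pos.
  apply Rmult_lt_0_compat; apply fact_pos.
  apply pow_le; lra. apply pow_le; lra.
Qed.

Lemma UB_core (n : nat) (L sh sl Cc : R) :
  0 < L -> 1 <= Cc -> Cc <= L -> 16 * Cc ^ 2 * L ^ 2 <= INR n ->
  0 < sl -> sl <= sh -> / Cc <= sl * sl -> sh * sh <= Cc -> 1/2 <= sh - sl ->
  Pwin n n (sh * sh * L / INR n) (sl * sl * L / INR n)
  <= 6 * Cc * (1 + 2 * Cc) * exp (- ((sh - sl) ^ 2 * L)) / sqrt L.
Proof.
  intros hL hC hCL hn hsl hls hlo hhi hgap.
  assert (0 < Cc ^ 2 * L ^ 2) by (apply Rmult_lt_0_compat; apply pow_lt; lra).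
  assert (hN: 0 < INR n) by nra.
  assert (hCL1: 1 <= Cc * L) by nra.
  assert (hCLn: Cc * L / INR n <= 1/16).
  { assert (Cc * L <= Cc ^ 2 * L ^ 2) by (replace (Cc ^ 2 * L ^ 2) with ((Cc * L) * (Cc * L)) by ring; assert (0 <= (Cc * L - 1) * (Cc * L)) by (apply Rmult_le_pos; lra); nra).
    apply Rmult_le_reg_r with (INR n); auto. unfold Rdiv. rewrite Rmult_assoc, Rinv_l by lra. lra. }
  set (P1 := sh * sh * L / INR n). set (Q1 := sl * sl * L / INR n).
  assert (hQ0: 0 <= Q1) by (unfold Q1; apply Rdiv_le_0_compat; nra).
  assert (hQP: Q1 <= P1) by (unfold Q1, P1; unfold Rdiv; apply Rmult_le_compat_r;
     [left; apply Rinv_0_lt_compat; lra| apply Rmult_le_compat_r; nra]).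
  assert (hP1: P1 <= Cc * L / INR n) by (unfold P1; unfold Rdiv; apply Rmult_le_compat_r;
     [left; apply Rinv_0_lt_compat; lra| apply Rmult_le_compat_r; nra]).
  assert (hshsl: sh * sl <= Cc) by nra.
  assert (hshsl': / Cc <= sh * sl) by nra.
  set (w := L * (sh * sl) * exp ((P1 + Q1) / 2)).
  set (s := sh / sl * exp ((P1 - Q1) / 2)).
  assert (hws: w * s = INR n * P1 * exp P1).
  { assert (ee: exp P1 = exp ((P1 + Q1) / 2) * exp ((P1 - Q1) / 2)).
    { rewrite <- exp_plus. f_equal. field. }
    assert (e1: INR n * P1 = sh * sh * L) by (unfold P1; field; lra).
    rewrite ee, e1. unfold w, s. field. lra. }
  assert (hwsd: w / s = INR n * Q1 * exp Q1).
  { pose proof (exp_pos ((P1 - Q1) / 2)).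
    assert (ee: exp ((P1 + Q1) / 2) = exp Q1 * exp ((P1 - Q1) / 2)).
    { rewrite <- exp_plus. f_equal. field. }
    assert (e1: INR n * Q1 = sl * sl * L) by (unfold Q1; field; lra).
    rewrite e1. unfold w, s. rewrite ee. field. repeat split; lra. }
  assert (hexpPQ: 1 <= exp ((P1 - Q1) / 2)).
  { pose proof (exp_ineq1_le ((P1 - Q1) / 2)). lra. }
  assert (hs1: sh / sl <= s).
  { unfold s. assert (0 <= sh / sl) by (apply Rdiv_le_0_compat; lra). nra. }
  assert (hshsl2: 1 + / (2 * sl) <= sh / sl).
  { apply Rmult_le_reg_r with sl; auto. unfold Rdiv. rewrite Rmult_assoc, Rinv_l by lra.
    rewrite Rmult_plus_distr_r, Rinv_mult, Rmult_assoc, Rinv_l by lra. lra. }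
  assert (hsl_le: sl <= Cc) by nra.
  assert (hs_ratio: s / (s - 1) <= 1 + 2 * Cc).
  { assert (0 < / (2 * sl)) by (apply Rinv_0_lt_compat; lra).
    assert (1 < s) by lra.
    replace (s / (s - 1)) with (1 + / (s - 1)) by (field; lra).
    assert (/ (s - 1) <= 2 * sl).
    { replace (2 * sl) with (/ / (2 * sl)) by (field; lra).
      apply Rinv_le_contravar; auto. lra. }
    lra. }
  assert (hexp0: 1 <= exp ((P1 + Q1) / 2)).
  { pose proof (exp_ineq1_le ((P1 + Q1) / 2)). assert (0 <= P1 + Q1) by lra. lra. }
  assert (hw1: L / Cc <= w).
  { unfold w. apply Rle_trans with (L * (sh * sl)).
    - unfold Rdiv. apply Rmult_le_compat_l; lra.
    - assert (0 <= L * (sh * sl)) by (apply Rmult_le_pos; nra). nra. }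
  assert (hLC: 1 <= L / Cc).
  { apply Rmult_le_reg_r with Cc. lra. unfold Rdiv. rewrite Rmult_assoc, Rinv_l; lra. }
  assert (hw: 1 <= w) by lra.
  assert (hs: 1 < s) by (assert (0 < / (2 * sl)) by (apply Rinv_0_lt_compat; lra); lra).
  assert (hf: forall i, (i <= n)%nat -> 0 <= binom_pmf n i P1 <= exp (- (INR n * P1)) * tt (w * s) i).
  { intros i hi. split. apply pmf_nonneg; lra. rewrite hws. apply pmf_upper; auto. lra. }
  assert (hg: forall j, (j <= n)%nat -> 0 <= binom_pmf n j Q1 <= exp (- (INR n * Q1)) * tt (w / s) j).
  { intros j hj. split. apply pmf_nonneg; lra. rewrite hwsd. apply pmf_upper; auto. lra. }
  unfold Pwin. rewrite Rmax_left, Rmin_right by lra.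
  eapply Rle_trans.
  { apply (dsum_upper (fun i => binom_pmf n i P1) (fun j => binom_pmf n j Q1) n (exp (- (INR n * P1))) (exp (- (INR n * Q1))) w s); auto.
    left; apply exp_pos. left; apply exp_pos. }
  assert (hsq: 0 < sqrt w) by (apply sqrt_lt_R0; lra).
  assert (hsqL: 0 < sqrt L) by (apply sqrt_lt_R0; lra).
  assert (hwsq: sqrt L / Cc <= sqrt w).
  { apply Rle_trans with (sqrt (L / Cc)).
    - rewrite sqrt_div_alt by lra.
      assert (sqrt Cc <= Cc).
      { rewrite <- (sqrt_square Cc) at 2 by lra. apply sqrt_le_1_alt. nra. }
      assert (0 < sqrt Cc) by (apply sqrt_lt_R0; lra).
      unfold Rdiv. apply Rmult_le_compat_l. lra. apply Rinv_le_contravar; lra.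
    - apply sqrt_le_1_alt. lra. }
  assert (hexpw: - (INR n * P1) + - (INR n * Q1) + w + w <= - ((sh - sl) ^ 2 * L) + 1/4).
  { assert (e1: INR n * P1 = sh * sh * L) by (unfold P1; field; lra).
    assert (e2: INR n * Q1 = sl * sl * L) by (unfold Q1; field; lra).
    rewrite e1, e2.
    assert (hPQ: (P1 + Q1) / 2 <= Cc * L / INR n).
    { unfold P1, Q1. unfold Rdiv. rewrite <- Rmult_plus_distr_r. rewrite Rmult_assoc.
      apply Rle_trans with ((sh * sh * L + sl * sl * L) * / INR n * / 2).
      right; field; lra.
      assert (sh * sh * L + sl * sl * L <= 2 * (Cc * L)) by nra.
      assert (0 < / INR n) by (apply Rinv_0_lt_compat; lra).
      nra. }
    pose proof (exp_le_lin ((P1 + Q1) / 2) ltac:(lra)).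
    assert (w <= L * (sh * sl) * (1 + 2 * (Cc * L / INR n))).
    { unfold w. apply Rmult_le_compat_l. apply Rmult_le_pos; nra. lra. }
    assert (L * (sh * sl) * (2 * (Cc * L / INR n)) <= 1/8).
    { assert (L * (sh * sl) <= L * Cc) by (apply Rmult_le_compat_l; lra).
      assert (0 <= Cc * L / INR n) by (apply Rdiv_le_0_compat; lra).
      assert (L * (sh * sl) * (2 * (Cc * L / INR n)) <= L * Cc * (2 * (Cc * L / INR n))).
      { apply Rmult_le_compat_r; lra. }
      assert (L * Cc * (2 * (Cc * L / INR n)) = 2 * (Cc ^ 2 * L ^ 2) / INR n) by (field; lra).
      assert (2 * (Cc ^ 2 * L ^ 2) / INR n <= 1/8).
      { apply Rmult_le_reg_r with (INR n); auto. unfold Rdiv. rewrite Rmult_assoc, Rinv_l; lra. }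
      lra. }
    nra. }
  replace (exp (- (INR n * P1)) * exp (- (INR n * Q1)) * (exp w * (3 * exp w / sqrt w) * (s / (s - 1))))
    with (3 * exp (- (INR n * P1) + - (INR n * Q1) + w + w) / sqrt w * (s / (s - 1)))
    by (rewrite !exp_plus; field; lra).
  assert (exp (- (INR n * P1) + - (INR n * Q1) + w + w) <= exp (- ((sh - sl) ^ 2 * L)) * 2).
  { apply Rle_trans with (exp (- ((sh - sl) ^ 2 * L) + 1/4)).
    destruct (Req_dec (- (INR n * P1) + - (INR n * Q1) + w + w) (- ((sh - sl) ^ 2 * L) + 1/4)) as [E|E].
    rewrite E; lra. left; apply exp_increasing; lra.
    rewrite exp_plus. apply Rmult_le_compat_l. left; apply exp_pos.
    pose proof (exp_le_lin (1/4) ltac:(lra)). lra. }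
  set (X := exp (- ((sh - sl) ^ 2 * L))) in *.
  set (Y := exp (- (INR n * P1) + - (INR n * Q1) + w + w)) in *.
  assert (0 < X) by apply exp_pos. assert (0 < Y) by apply exp_pos.
  assert (0 < s / (s - 1)) by (apply Rdiv_lt_0_compat; lra).
  assert (h1: 3 * Y / sqrt w <= 3 * (X * 2) / (sqrt L / Cc)).
  { unfold Rdiv. apply Rmult_le_compat; try lra.
    left; apply Rinv_0_lt_compat; auto.
    apply Rinv_le_contravar; auto. apply Rdiv_lt_0_compat; lra. }
  assert (h2: 3 * Y / sqrt w * (s / (s - 1)) <= 3 * (X * 2) / (sqrt L / Cc) * (1 + 2 * Cc)).
  { apply Rmult_le_compat; auto; try lra.
    apply Rdiv_le_0_compat; lra. }
  eapply Rle_trans; [exact h2|]. right. field. lra.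
Qed.

Lemma tt_mul a b k : tt a k * tt b k * INR (Factorial.fact k) = tt (a * b) k.
Proof. unfold tt. rewrite Rpow_mult_distr. pose proof (fact_pos k). field. lra. Qed.

Lemma LB_core (n : nat) (L sh sl Cc : R) :
  0 < L -> 1 <= Cc -> Cc <= L -> 16 * Cc ^ 2 * L ^ 2 <= INR n ->
  0 < sl -> sl <= sh -> / Cc <= sl * sl -> sh * sh <= Cc ->
  exp (- ((sh - sl) ^ 2 * L)) / (1764 * Cc * sqrt L)
  <= Pwin n n (sh * sh * L / INR n) (sl * sl * L / INR n).
Proof.
  intros hL hC hCL hn hsl hls hlo hhi.
  assert (0 < Cc ^ 2 * L ^ 2) by (apply Rmult_lt_0_compat; apply pow_lt; lra).
  assert (hN: 0 < INR n) by nra.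
  assert (hCL1: 1 <= Cc * L) by nra.
  assert (hCLn: Cc * L / INR n <= 1/16).
  { assert (Cc * L <= Cc ^ 2 * L ^ 2) by (replace (Cc ^ 2 * L ^ 2) with ((Cc * L) * (Cc * L)) by ring; assert (0 <= (Cc * L - 1) * (Cc * L)) by (apply Rmult_le_pos; lra); nra).
    apply Rmult_le_reg_r with (INR n); auto. unfold Rdiv. rewrite Rmult_assoc, Rinv_l by lra. lra. }
  set (P1 := sh * sh * L / INR n). set (Q1 := sl * sl * L / INR n).
  assert (hQ0: 0 <= Q1) by (unfold Q1; apply Rdiv_le_0_compat; nra).
  assert (hQP: Q1 <= P1) by (unfold Q1, P1; unfold Rdiv; apply Rmult_le_compat_r;
     [left; apply Rinv_0_lt_compat; lra| apply Rmult_le_compat_r; nra]).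
  assert (hP1: P1 <= Cc * L / INR n) by (unfold P1; unfold Rdiv; apply Rmult_le_compat_r;
     [left; apply Rinv_0_lt_compat; lra| apply Rmult_le_compat_r; nra]).
  assert (hshsl: sh * sl <= Cc) by nra.
  assert (hshsl': / Cc <= sh * sl) by nra.
  set (z := L * (sh * sl)).
  assert (hLC: 1 <= L / Cc).
  { apply Rmult_le_reg_r with Cc. lra. unfold Rdiv. rewrite Rmult_assoc, Rinv_l; lra. }
  assert (hz1: 1 <= z).
  { unfold z. apply Rle_trans with (L / Cc); auto. unfold Rdiv. apply Rmult_le_compat_l; lra. }
  assert (hzC: z <= Cc * L) by (unfold z; nra).
  assert (hsz: 1 <= sqrt z) by (rewrite <- sqrt_1; apply sqrt_le_1_alt; lra).
  assert (hszz: sqrt z * sqrt z = z) by (apply sqrt_sqrt; lra).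
  assert (hszle: sqrt z <= z) by nra.
  destruct (nfloor_ex z ltac:(lra)) as [m hm].
  destruct (nfloor_ex (sqrt z) ltac:(lra)) as [r hr].
  assert (hkb: forall t, (t <= r)%nat -> INR (m + t) <= 2 * (Cc * L)).
  { intros t ht. rewrite plus_INR. assert (INR t <= INR r) by (apply le_INR; auto). lra. }
  assert (hmrn: (m + r <= n)%nat).
  { apply INR_le. specialize (hkb r (le_n _)).
    assert (2 * (Cc * L) <= INR n).
    { apply Rmult_le_reg_r with (/ INR n). apply Rinv_0_lt_compat; lra.
      rewrite Rinv_r by lra. unfold Rdiv in hCLn. lra. }
    lra. }
  assert (hnP: INR n * P1 ^ 2 <= / 4).
  { assert (0 <= P1) by lra.
    assert (P1 ^ 2 <= (Cc * L / INR n) ^ 2) by (apply pow_incr; lra).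
    assert (INR n * (Cc * L / INR n) ^ 2 = (Cc * L) * (Cc * L / INR n)) by (field; lra).
    assert ((Cc * L) * (Cc * L / INR n) <= / 4).
    { replace ((Cc * L) * (Cc * L / INR n)) with (Cc ^ 2 * L ^ 2 / INR n) by (field; lra).
      apply Rmult_le_reg_r with (INR n); auto. unfold Rdiv. rewrite Rmult_assoc, Rinv_l; lra. }
    nra. }
  assert (hnQ: INR n * Q1 ^ 2 <= / 4).
  { assert (Q1 ^ 2 <= P1 ^ 2) by (apply pow_incr; lra). nra. }
  assert (hkk: forall t, (t <= r)%nat -> INR (m + t) * INR (m + t) <= INR n / 4).
  { intros t ht. specialize (hkb t ht). pose proof (pos_INR (m + t)).
    assert (INR (m + t) * INR (m + t) <= (2 * (Cc * L)) * (2 * (Cc * L))) by nra.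
    lra. }
  assert (hn0: (0 < n)%nat) by (apply INR_lt; simpl; lra).
  set (E := exp (- (INR n * P1)) * exp (- (INR n * Q1))).
  assert (hterm: forall t, (t <= r)%nat ->
    E * tt z (m + t) ^ 2 / 4 <= binom_pmf n (m + t) P1 * binom_pmf n (m + t) Q1).
  { intros t ht.
    pose proof (pmf_lower n (m + t) P1 ltac:(lia) ltac:(lra) hn0 (hkk t ht) hnP) as h1.
    pose proof (pmf_lower n (m + t) Q1 ltac:(lia) ltac:(lra) hn0 (hkk t ht) hnQ) as h2.
    assert (ez: tt (INR n * P1) (m + t) * tt (INR n * Q1) (m + t) = tt z (m + t) ^ 2).
    { assert (e1: INR n * P1 = sh * sh * L) by (unfold P1; field; lra).
      assert (e2: INR n * Q1 = sl * sl * L) by (unfold Q1; field; lra).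
      rewrite e1, e2. unfold tt. pose proof (fact_pos (m + t)).
      transitivity ((sh * sh * L) ^ (m + t) * (sl * sl * L) ^ (m + t) / INR (Factorial.fact (m + t)) ^ 2).
      { field. lra. }
      rewrite <- Rpow_mult_distr.
      replace (sh * sh * L * (sl * sl * L)) with (z * z) by (unfold z; ring).
      rewrite Rpow_mult_distr. field. lra. }
    assert (0 <= exp (- (INR n * P1)) * tt (INR n * P1) (m + t) / 2).
    { apply Rdiv_le_0_compat; [|lra]. apply Rmult_le_pos. left; apply exp_pos. apply tt_nonneg. nra. }
    assert (0 <= exp (- (INR n * Q1)) * tt (INR n * Q1) (m + t) / 2).
    { apply Rdiv_le_0_compat; [|lra]. apply Rmult_le_pos. left; apply exp_pos. apply tt_nonneg. nra. }
    apply Rle_trans with ((exp (- (INR n * P1)) * tt (INR n * P1) (m + t) / 2) *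
                          (exp (- (INR n * Q1)) * tt (INR n * Q1) (m + t) / 2)).
    - right. unfold E. rewrite <- ez. field.
    - apply Rmult_le_compat; auto. }
  unfold Pwin. rewrite Rmax_left, Rmin_right by lra.
  eapply Rle_trans; [|apply (dsum_lower (fun i => binom_pmf n i P1) (fun j => binom_pmf n j Q1) n m r);
    [intros; apply pmf_nonneg; lra | intros; apply pmf_nonneg; lra | exact hmrn]].
  eapply Rle_trans; [|apply sum_Rle; intros t ht; apply (hterm t ht)].
  assert (es: sum_f_R0 (fun t => E * tt z (m + t) ^ 2 / 4) r =
              E / 4 * sum_f_R0 (fun t => tt z (m + t) ^ 2) r).
  { rewrite scal_sum. apply sum_eq. intros; field. }
  rewrite es.
  pose proof (poisson_window z m r hz1 hm hr) as hw.
  assert (hE: E * (exp z * exp z) = exp (- ((sh - sl) ^ 2 * L))).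
  { unfold E. rewrite <- !exp_plus. f_equal.
    assert (e1: INR n * P1 = sh * sh * L) by (unfold P1; field; lra).
    assert (e2: INR n * Q1 = sl * sl * L) by (unfold Q1; field; lra).
    rewrite e1, e2. unfold z. ring. }
  assert (hE0: 0 < E) by (unfold E; apply Rmult_lt_0_compat; apply exp_pos).
  assert (hsqz: sqrt z <= Cc * sqrt L).
  { assert (sqrt Cc <= Cc).
    { rewrite <- (sqrt_square Cc) at 2 by lra. apply sqrt_le_1_alt. nra. }
    apply Rle_trans with (sqrt (Cc * L)). apply sqrt_le_1_alt; lra.
    rewrite sqrt_mult by lra. apply Rmult_le_compat_r; auto. apply sqrt_pos. }
  assert (0 < sqrt L) by (apply sqrt_lt_R0; lra).
  apply Rle_trans with (E / 4 * (exp z * exp z / (441 * sqrt z))).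
  2: { apply Rmult_le_compat_l; auto. lra. }
  rewrite <- hE.
  pose proof (exp_pos z).
  assert (0 < E * (exp z * exp z)) by (apply Rmult_lt_0_compat; nra).
  replace (E / 4 * (exp z * exp z / (441 * sqrt z))) with (E * (exp z * exp z) / (1764 * sqrt z))
    by (field; lra).
  unfold Rdiv. apply Rmult_le_compat_l. lra.
  apply Rinv_le_contravar. nra. nra.
Qed.

Lemma ln_le_id x : 0 < x -> ln x <= x - 1.
Proof. intros hx. pose proof (exp_ineq1_le (ln x)). rewrite exp_ln in H; lra. Qed.

Lemma ln_sqrt' x : 0 < x -> ln (sqrt x) = ln x / 2.
Proof.
  intros hx. assert (0 < sqrt x) by (apply sqrt_lt_R0; lra).
  rewrite <- (sqrt_sqrt x) at 2 by lra. rewrite ln_mult by lra. field.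
Qed.

Lemma ln_sq_bound x : 1 <= x -> ln x * ln x <= 16 * sqrt x.
Proof.
  intros hx.
  assert (h1: 0 < sqrt x) by (apply sqrt_lt_R0; lra).
  assert (h2: 0 < sqrt (sqrt x)) by (apply sqrt_lt_R0; lra).
  assert (e: ln x = 4 * ln (sqrt (sqrt x))).
  { rewrite ln_sqrt', ln_sqrt' by lra. field. }
  pose proof (ln_le_id _ h2).
  assert (0 <= ln x) by (rewrite <- ln_1; apply ln_le; lra).
  assert (ln x <= 4 * sqrt (sqrt x)) by lra.
  assert (sqrt (sqrt x) * sqrt (sqrt x) = sqrt x) by (apply sqrt_sqrt; lra).
  nra.
Qed.

Lemma large_n (Cc : R) : 1 <= Cc -> exists N1 : nat, forall n, (N1 <= n)%nat ->
  1 <= INR n /\ Cc <= ln (INR n) /\ 16 * Cc ^ 2 * ln (INR n) ^ 2 <= INR n.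
Proof.
  intros hC.
  set (B := Rmax (exp Cc) (65536 * Cc ^ 4)).
  assert (hB: 0 <= B) by (unfold B; apply Rle_trans with (exp Cc); [left; apply exp_pos|apply Rmax_l]).
  destruct (nfloor_ex B hB) as [N1 hN1].
  exists (S N1). intros n hn.
  assert (hnB: B <= INR n). { apply Rle_trans with (INR (S N1)). rewrite S_INR; lra. apply le_INR; auto. }
  assert (he: exp Cc <= INR n) by (apply Rle_trans with B; auto; apply Rmax_l).
  assert (hc4: 65536 * Cc ^ 4 <= INR n) by (apply Rle_trans with B; auto; apply Rmax_r).
  pose proof (exp_ineq1_le Cc).
  assert (h1: 1 <= INR n) by lra.
  split; auto. split.
  - rewrite <- (ln_exp Cc). apply ln_le; auto. apply exp_pos.
  - pose proof (ln_sq_bound _ h1).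
    assert (hs: 0 < sqrt (INR n)) by (apply sqrt_lt_R0; lra).
    assert (hss: sqrt (INR n) * sqrt (INR n) = INR n) by (apply sqrt_sqrt; lra).
    assert (256 * Cc ^ 2 <= sqrt (INR n)).
    { apply Rsqr_incr_0_var. unfold Rsqr. rewrite hss. nra. lra. }
    assert (0 <= 16 * Cc ^ 2) by nra.
    apply Rle_trans with (16 * Cc ^ 2 * (16 * sqrt (INR n))).
    + simpl pow at 2. rewrite Rmult_1_r. apply Rmult_le_compat_l; auto.
    + nra.
Qed.

Lemma per_n (a b Cc : R) (n : nat) :
  0 < a -> 0 < b -> / Cc <= a <= Cc -> / Cc <= b <= Cc -> 1 <= Cc ->
  1 <= INR n -> Cc <= ln (INR n) -> 16 * Cc ^ 2 * ln (INR n) ^ 2 <= INR n ->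
  let X := INR n * Pdiag n (a * / INR n * ln (INR n)) (b * / INR n * ln (INR n)) in
  let Qv := (a + b - 2 * sqrt (a * b) - 1) * ln (INR n) + / 2 * ln (ln (INR n)) in
  exp (- Qv) / (1764 * Cc) <= X /\ (0 <= Qv -> X <= 6 * Cc * (1 + 2 * Cc) * exp (- Qv)).
Proof.
  intros ha hb hA hB hC hn1 hL hn X Qv.
  set (L := ln (INR n)) in *.
  assert (hL0: 0 < L) by lra. assert (hN: 0 < INR n) by lra.
  set (hi := Rmax a b). set (lo := Rmin a b).
  assert (hhl: hi * lo = a * b /\ hi + lo = a + b /\ lo <= hi /\ / Cc <= lo /\ hi <= Cc /\ 0 < lo).
  { unfold hi, lo, Rmax, Rmin. destruct Rle_dec; repeat split; lra. }
  destruct hhl as [hprod [hsum [hlh [hlo [hhi hlo0]]]]].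
  set (sh := sqrt hi). set (sl := sqrt lo).
  assert (esh: sh * sh = hi) by (apply sqrt_sqrt; lra).
  assert (esl: sl * sl = lo) by (apply sqrt_sqrt; lra).
  assert (hsl0: 0 < sl) by (apply sqrt_lt_R0; lra).
  assert (hslh: sl <= sh) by (apply sqrt_le_1_alt; lra).
  assert (eshsl: sh * sl = sqrt (a * b)) by (unfold sh, sl; rewrite <- sqrt_mult by lra; rewrite hprod; auto).
  assert (eg: (sh - sl) ^ 2 = a + b - 2 * sqrt (a * b)).
  { replace ((sh - sl) ^ 2) with (sh * sh + sl * sl - 2 * (sh * sl)) by ring. rewrite esh, esl, eshsl. lra. }
  set (P1 := sh * sh * L / INR n). set (Q1 := sl * sl * L / INR n).
  assert (hk: 0 < / INR n * L) by (apply Rmult_lt_0_compat; [apply Rinv_0_lt_compat|]; lra).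
  assert (ePQ: Rmax (a * / INR n * L) (b * / INR n * L) = P1 /\ Rmin (a * / INR n * L) (b * / INR n * L) = Q1
    /\ Rmax P1 Q1 = P1 /\ Rmin P1 Q1 = Q1).
  { unfold P1, Q1. rewrite esh, esl. unfold hi, lo.
    replace (a * / INR n * L) with (a * (/ INR n * L)) by ring.
    replace (b * / INR n * L) with (b * (/ INR n * L)) by ring.
    unfold Rmax, Rmin. repeat destruct Rle_dec; repeat split; try (unfold Rdiv; ring); nra. }
  destruct ePQ as [e1 [e2 [e3 e4]]].
  assert (eP: Pdiag n (a * / INR n * L) (b * / INR n * L) = Pwin n n P1 Q1).
  { unfold Pdiag, Pwin. rewrite e1, e2, e3, e4. reflexivity. }
  assert (hsqL: 0 < sqrt L) by (apply sqrt_lt_R0; lra).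
  assert (eQ: exp (- Qv) = INR n * exp (- ((sh - sl) ^ 2 * L)) / sqrt L).
  { unfold Qv. fold L. rewrite <- eg.
    replace (- (((sh - sl) ^ 2 - 1) * L + / 2 * ln L)) with
      (- ((sh - sl) ^ 2 * L) + L - ln (sqrt L)) by (rewrite ln_sqrt' by lra; field).
    unfold Rminus. rewrite !exp_plus, (exp_Ropp (ln (sqrt L))), (exp_ln (sqrt L)) by lra.
    assert (eL: exp L = INR n) by (unfold L; apply exp_ln; lra).
    rewrite eL. field. lra. }
  split.
  - unfold X. rewrite eP. fold L.
    pose proof (LB_core n L sh sl Cc hL0 hC hL hn hsl0 hslh ltac:(lra) ltac:(lra)) as hlb.
    fold P1 Q1 in hlb. rewrite eQ.
    apply Rle_trans with (INR n * (exp (- ((sh - sl) ^ 2 * L)) / (1764 * Cc * sqrt L))).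
    right; field; lra. apply Rmult_le_compat_l; lra.
  - intros hQ.
    assert (hg: 1/2 <= (sh - sl) ^ 2).
    { unfold Qv in hQ. fold L in hQ. rewrite <- eg in hQ.
      pose proof (ln_le_id L hL0).
      destruct (Rle_dec (1/2) ((sh - sl) ^ 2)) as [h|h]; auto.
      exfalso. apply Rnot_le_lt in h.
      assert (((sh - sl) ^ 2 - 1) * L < - L / 2) by nra. lra. }
    assert (hgap: 1/2 <= sh - sl).
    { destruct (Rle_dec (1/2) (sh - sl)) as [h|h]; auto. apply Rnot_le_lt in h.
      assert (0 <= sh - sl) by lra. simpl in hg. nra. }
    pose proof (UB_core n L sh sl Cc hL0 hC hL hn hsl0 hslh ltac:(lra) ltac:(lra) hgap) as hub.
    fold P1 Q1 in hub.
    unfold X. rewrite eP. fold L. rewrite eQ.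
    apply Rle_trans with (INR n * (6 * Cc * (1 + 2 * Cc) * exp (- ((sh - sl) ^ 2 * L)) / sqrt L)).
    apply Rmult_le_compat_l; lra. right; field; lra.
Qed.

Theorem proposition2p8 (a b : nat -> R)
  (ha : forall n, 0 < a n) (hb : forall n, 0 < b n)
  (hC : exists C : R, 0 < C /\ exists N : nat, forall n, (N <= n)%nat ->
          / C <= a n <= C /\ / C <= b n <= C) :
  let p := fun n : nat => a n * / INR n * ln (INR n) in
  let q := fun n : nat => b n * / INR n * ln (INR n) in
  is_lim_seq (fun n : nat => INR n * Pdiag n (p n) (q n)) 0
  <->
  is_lim_seq (fun n : nat =>
      (a n + b n - 2 * sqrt (a n * b n) - 1) * ln (INR n)
      + / 2 * ln (ln (INR n))) p_infty.
Proof.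
  intros p q. destruct hC as [Cc [hC0 [N hN]]].
  assert (hC1: 1 <= Cc).
  { destruct (hN N (le_n _)) as [[h1 h2] _].
    assert (/ Cc <= Cc) by lra.
    destruct (Rle_dec 1 Cc) as [h|h]; auto. apply Rnot_le_lt in h.
    assert (1 < / Cc). { apply Rmult_lt_reg_r with Cc; auto. rewrite Rinv_l; lra. }
    lra. }
  destruct (large_n Cc hC1) as [N1 hN1].
  assert (hper: forall n, (max N N1 <= n)%nat ->
    exp (- ((a n + b n - 2 * sqrt (a n * b n) - 1) * ln (INR n) + / 2 * ln (ln (INR n)))) / (1764 * Cc)
      <= INR n * Pdiag n (p n) (q n) /\
    (0 <= (a n + b n - 2 * sqrt (a n * b n) - 1) * ln (INR n) + / 2 * ln (ln (INR n)) ->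
     INR n * Pdiag n (p n) (q n) <= 6 * Cc * (1 + 2 * Cc) *
       exp (- ((a n + b n - 2 * sqrt (a n * b n) - 1) * ln (INR n) + / 2 * ln (ln (INR n)))))).
  { intros n hn. destruct (hN n ltac:(lia)) as [hA hB].
    destruct (hN1 n ltac:(lia)) as [h1 [h2 h3]].
    exact (per_n (a n) (b n) Cc n (ha n) (hb n) hA hB hC1 h1 h2 h3). }
  split.
  - intro hX. apply is_lim_seq_spec in hX. apply is_lim_seq_spec. intro M.
    assert (heps: 0 < exp (- M) / (1764 * Cc)) by (apply Rdiv_lt_0_compat; [apply exp_pos|lra]).
    destruct (hX (mkposreal _ heps)) as [N2 hN2].
    exists (max N2 (max N N1)). intros n hn.
    specialize (hN2 n ltac:(lia)). simpl in hN2. rewrite Rminus_0_r in hN2.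
    destruct (hper n ltac:(lia)) as [hl _].
    apply Rabs_def2 in hN2. destruct hN2 as [hN2 _].
    assert (exp (- ((a n + b n - 2 * sqrt (a n * b n) - 1) * ln (INR n) + / 2 * ln (ln (INR n))))
            < exp (- M)).
    { apply Rmult_lt_reg_r with (/ (1764 * Cc)). apply Rinv_0_lt_compat; lra.
      unfold Rdiv in hl, hN2. lra. }
    apply exp_lt_inv in H. lra.
  - intro hQ. apply is_lim_seq_spec in hQ. apply is_lim_seq_spec. intro eps.
    set (K := 6 * Cc * (1 + 2 * Cc)).
    assert (hK: 0 < K) by (unfold K; apply Rmult_lt_0_compat; lra).
    pose proof (cond_pos eps) as he.
    set (M := Rmax 0 (ln (K / eps))).
    destruct (hQ M) as [N2 hN2].
    exists (max N2 (max N N1)). intros n hn.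
    specialize (hN2 n ltac:(lia)). cbv beta in hN2.
    destruct (hper n ltac:(lia)) as [hl hu].
    set (Qv := (a n + b n - 2 * sqrt (a n * b n) - 1) * ln (INR n) + / 2 * ln (ln (INR n))) in *.
    assert (hM0: 0 <= M) by apply Rmax_l.
    specialize (hu ltac:(lra)).
    assert (hlo: 0 <= INR n * Pdiag n (p n) (q n)).
    { eapply Rle_trans; [|exact hl]. apply Rdiv_le_0_compat. left; apply exp_pos. lra. }
    assert (hexpM: exp (- Qv) < exp (- M)) by (apply exp_increasing; lra).
    assert (hKM: K * exp (- M) <= eps).
    { assert (ln (K / eps) <= M) by apply Rmax_r.
      assert (H0: exp (- M) <= exp (- ln (K / eps))).
      { destruct (Req_dec M (ln (K / eps))) as [E|E]. rewrite E; lra.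
        left; apply exp_increasing; lra. }
      rewrite (exp_Ropp (ln (K / eps))), (exp_ln (K / eps)) in H0 by (apply Rdiv_lt_0_compat; lra).
      replace (/ (K / eps)) with (eps / K) in H0 by (field; lra).
      apply Rmult_le_reg_r with (/ K). apply Rinv_0_lt_compat; lra.
      replace (K * exp (- M) * / K) with (exp (- M)) by (field; lra).
      unfold Rdiv in H0. lra. }
    rewrite Rminus_0_r. rewrite Rabs_right by lra.
    fold K in hu. nra.
Qed.
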